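(* For every natural number $d>1$ and every $\varepsilon>0$ there are $L,D>0$ such that the following holds. Let $G=(V_1,V_2,E)$ be a bipartite graph and let $u_1,\ldots,u_L\in V_1$ be such that $S_i:=N(u_i)\setminus\bigcup_{j<i}N(u_j)$ satisfies $|S_i|\ge D$ for all $i\in[L]$. If $W\subset V_2$ is chosen uniformly at random among all subsets of $V_2$, then with probability at least $1-\varepsilon$ the following holds: for every pair $(k,m)$ of integers with $0\le k\le m$ and $2\le m\le d$ there is $i\in[L]$ with $d^W(u_i)\equiv k\pmod m$.
   Context: A bipartite graph $G=(V_1,V_2,E)$ has vertex set $V_1\sqcup V_2$ and edge set $E\subset V_1\times V_2$; $N(v)$ is the neighbourhood of $v$ and $d^W(v)=|N(v)\cap W|$. *)

(* Defs.v *)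
From HB Require Import structures.
From mathcomp Require Import all_boot all_order all_algebra.
From mathcomp Require Import reals.
Set Implicit Arguments. Unset Strict Implicit. Unset Printing Implicit Defensive.
Import Order.TTheory GRing.Theory Num.Theory.

Definition nbhd (V1 V2 : finType) (E : {set V1 * V2}) (v : V1) : {set V2} :=
  [set w | (v, w) \in E].

Definition degW (V1 V2 : finType) (E : {set V1 * V2}) (W : {set V2}) (v : V1)
  : nat := #|nbhd E v :&: W|.

(* S_i := N(u_i) \ \bigcup_{j<i} N(u_j), indices 0..L-1 *)
Definition Snew (V1 V2 : finType) (E : {set V1 * V2}) (L : nat)
  (u : 'I_L -> V1) (i : 'I_L) : {set V2} :=
  nbhd E (u i) :\: \bigcup_(j < L | (j < i)%N) nbhd E (u j).

Definition prob_subset (R : realType) (V2 : finType) (P : pred {set V2}) : R :=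
  (#|[set W : {set V2} | P W]|%:R / (2 ^ #|V2|)%:R)%R.

(* Main.v *)
Require Import Defs.
From HB Require Import structures.
From mathcomp Require Import all_boot all_order all_algebra.
From mathcomp Require Import reals.
From mathcomp Require Import zify ring lra.
Import Order.TTheory GRing.Theory Num.Theory.
Set Implicit Arguments. Unset Strict Implicit.

Definition Ysub (T : finType) (A : {set T}) (j : nat) : {set T} :=
  [set x in take j (enum A)].

Lemma Ysub_sub (T : finType) (A : {set T}) j : Ysub A j \subset A.
Proof.
apply/subsetP => x; rewrite inE => /mem_take; by rewrite mem_enum.
Qed.

Lemma Ysub_card (T : finType) (A : {set T}) j : (j <= #|A|)%N -> #|Ysub A j| = j.
Proof.
move=> hj; rewrite /Ysub cardsE.
have /card_uniqP -> : uniq (take j (enum A)) by apply: take_uniq; apply: enum_uniq.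
by rewrite size_takel // -cardE.
Qed.

Lemma union_bound (I T : finType) (B : I -> {set T}) (A : {set T}) :
  A \subset \bigcup_i B i -> (#|A| <= \sum_i #|B i|)%N.
Proof.
move=> /subset_leq_card h; apply: leq_trans h _.
elim/big_rec2: _ => [|i n U _ hU]; first by rewrite cards0.
apply: leq_trans (leq_card_setU _ _) _; exact: leq_add.
Qed.

Lemma step (T : finType) (A N : {set T}) (P : pred {set T}) (k m : nat) :
  A \subset N -> (0 < m)%N -> (m <= #|A|.+1)%N ->
  (forall W, P W = P (W :\: A)) ->
  (#|[set W | P W]| <= #|[set W | P W && (#|N :&: W| == k %[mod m])]| * 2 ^ #|A|)%N.
Proof.
move=> sAN m0 mA hP.
pose j X := ((m - #|N :&: X| %% m + k) %% m)%N.
pose h W := (W :\: A) :|: Ysub A (j (W :\: A)).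
have hA W : h W :\: A = W :\: A.
  apply/setP => x; rewrite !inE.
  case xA: (x \in A) => //=.
  have -> : (x \in take (j (W :\: A)) (enum A)) = false.
    by apply/negP => /mem_take; rewrite mem_enum xA.
  by rewrite orbF.
have hdeg W : #|N :&: h W| = (#|N :&: (W :\: A)| + j (W :\: A))%N.
  have jle : (j (W :\: A) <= #|A|)%N.
    rewrite /j; have := ltn_pmod (m - #|N :&: (W :\: A)| %% m + k) m0; lia.
  rewrite /h setIUr -{2}(Ysub_card jle).
  set Y := Ysub A (j (W :\: A)).
  have YA : Y \subset A by exact: Ysub_sub.
  have -> : N :&: Y = Y.
    by apply/setIidPr; apply: subset_trans YA sAN.
  rewrite cardsU.
  suff -> : N :&: (W :\: A) :&: Y = set0 by rewrite cards0 subn0.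
  apply/setP => x; rewrite [x \in set0]inE.
  apply/negP; rewrite !in_setI in_setD => /andP [/andP [_ /andP [xnA _]] /(subsetP YA)].
  by rewrite (negbTE xnA).
have hcong W : #|N :&: h W| == k %[mod m].
  rewrite hdeg /j modnDmr.
  set r := #|N :&: (W :\: A)|.
  have rm := ltn_pmod r m0.
  rewrite addnA -modnDml.
  have -> : (r + (m - r %% m)) = r %/ m * m + m by rewrite {1}(divn_eq r m); lia.
  by rewrite modnMDl modnn add0n.
set S := [set W | P W].
have imS : h @: S \subset [set W | P W && (#|N :&: W| == k %[mod m])].
  apply/subsetP => y /imsetP [W PW ->]; rewrite inE in PW.
  by rewrite inE hcong andbT hP hA -hP.
pose f (p : {set T} * {set T}) := (p.1 :\: A) :|: p.2.
have SS : S \subset f @: setX (h @: S) (powerset A).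
  apply/subsetP => W WS; apply/imsetP; exists (h W, W :&: A).
    by rewrite inE /= imset_f //= inE subsetIr.
  by rewrite /f /= hA setUC setID.
apply: leq_trans (subset_leq_card SS) _.
apply: leq_trans (leq_imset_card _ _) _.
rewrite cardsX card_powerset leq_mul2r; apply/orP; right.
exact: subset_leq_card imS.
Qed.

Lemma card_sets (T : finType) : #|{set T}| = 2 ^ #|T|.
Proof. by have := card_powerset [set: T]; rewrite powersetT !cardsT. Qed.

Definition Pt (V1 V2 : finType) (E : {set V1 * V2}) (L : nat) (u : 'I_L -> V1)
  (k m t : nat) (W : {set V2}) : bool :=
  [forall i : 'I_L, (i < t)%N ==> ~~ (degW E W (u i) == k %[mod m])].

Lemma Snew_disj (V1 V2 : finType) (E : {set V1 * V2}) (L : nat) (u : 'I_L -> V1)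
  (i0 i : 'I_L) x : (i < i0)%N -> x \in Snew E u i0 -> x \notin nbhd E (u i).
Proof.
move=> lt; rewrite /Snew in_setD => /andP [H _]; apply: contra H => xi.
by apply/bigcupP; exists i.
Qed.

Lemma Pt_step (V1 V2 : finType) (E : {set V1 * V2}) (L : nat) (u : 'I_L -> V1)
  (d k m : nat) (i0 : 'I_L) :
  (d.-1 <= #|Snew E u i0|)%N -> (0 < m)%N -> (m <= d)%N ->
  (#|[set W | Pt E u k m i0.+1 W]| * 2 ^ d.-1 <=
   #|[set W | Pt E u k m i0 W]| * (2 ^ d.-1 - 1))%N.
Proof.
move=> hS m0 md.
set A := Ysub (Snew E u i0) d.-1.
have cA : #|A| = d.-1 by rewrite Ysub_card.
have AS : A \subset Snew E u i0 by exact: Ysub_sub.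
have AN : A \subset nbhd E (u i0).
  apply: subset_trans AS _; apply/subsetP => x; rewrite /Snew in_setD; by case/andP.
have hP : forall W, Pt E u k m i0 W = Pt E u k m i0 (W :\: A).
  move=> W; apply: eq_forallb => i; case: (ltnP i i0) => //= lt.
  rewrite /degW; suff -> : nbhd E (u i) :&: (W :\: A) = nbhd E (u i) :&: W by [].
  apply/setP => x; rewrite !in_setI in_setD; case xN: (x \in nbhd E (u i)) => //=.
  case xA: (x \in A) => //=.
  by move: (Snew_disj lt (subsetP AS x xA)); rewrite xN.
have mA : (m <= #|A|.+1)%N by rewrite cA; lia.
have := step k AN m0 mA hP; rewrite cA => H.
set X := [set W | Pt E u k m i0 W].
set G := [set W | Pt E u k m i0 W && _] in H.
have e1 : [set W | Pt E u k m i0.+1 W] = X :\: G.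
  apply/setP => W; rewrite !inE /Pt -/(degW E W (u i0)).
  have -> : [forall i : 'I_L, (i < i0.+1)%N ==> (degW E W (u i) != k %[mod m])] =
     [forall i : 'I_L, (i < i0)%N ==> (degW E W (u i) != k %[mod m])] &&
     (degW E W (u i0) != k %[mod m]).
    apply/forallP/andP.
    - move=> h; split; last by have := h i0; rewrite ltnSn.
      by apply/forallP => i; apply/implyP => lt; have := h i; rewrite ltnS ltnW.
    - case=> /forallP h1 h2 i; apply/implyP; rewrite ltnS leq_eqVlt => /orP [/eqP ii|lt].
        by have -> : i = i0 by apply: val_inj.
      by have := h1 i; rewrite lt.
  set P0 := [forall i, _].
  by case: P0; rewrite /= ?andbT ?andbF.
have e2 : G = X :&: G.
  by apply/setP => W; rewrite !inE; case: (Pt _ _ _ _ _ _) => //.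
have := cardsID G X; rewrite -e2 -e1 => hc.
have c1 : (1 <= 2 ^ d.-1)%N by rewrite expn_gt0.
move: H hc c1.
set x := #|X|; set g := #|G|; set b := #|[set W | Pt E u k m i0.+1 W]|; set c := 2 ^ d.-1.
move=> H hc c1; nia.
Qed.

Lemma Pt_iter (V1 V2 : finType) (E : {set V1 * V2}) (L : nat) (u : 'I_L -> V1)
  (d k m : nat) :
  (forall i, d.-1 <= #|Snew E u i|)%N -> (0 < m)%N -> (m <= d)%N ->
  forall t, (t <= L)%N ->
  (#|[set W | Pt E u k m t W]| * (2 ^ d.-1) ^ t <= 2 ^ #|V2| * (2 ^ d.-1 - 1) ^ t)%N.
Proof.
move=> hS m0 md; elim=> [|t IH] tL.
  by rewrite !expn0 !muln1 -card_sets max_card.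
have tL' : (t < L)%N by [].
have := Pt_step k (hS (Ordinal tL')) m0 md => /= H1.
have {}IH := IH (ltnW tL).
rewrite !expnS.
move: H1 IH; set b := #|_|; set x := #|_|; set c := 2 ^ d.-1; set y := c ^ t;
  set z := (c - 1) ^ t; set N := 2 ^ _.
move=> H1 IH.
rewrite mulnA; apply: leq_trans (leq_mul H1 (leqnn y)) _.
rewrite mulnAC [(c - 1) * z]mulnC mulnA; exact: leq_mul.
Qed.

Lemma pow_bound (a L : nat) : (a ^ L * (a + L) <= (a + 1) ^ L * a)%N.
Proof.
elim: L => [|L IH]; first by rewrite !expn0 addn0.
rewrite !expnS; move: IH; set p := a ^ L; set q := (a + 1) ^ L => IH; nia.
Qed.


Section RF.
Local Open Scope ring_scope.
Lemma real_final (R : realType) (eps : R) (g b N : nat) : 0 < eps -> eps^-1 < N%:R ->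
  (b * N <= g + b)%N -> (0 < g + b)%N -> 1 - eps <= g%:R / (g + b)%:R.
Proof.
move=> eps0 hN hb' hpos.
have hb : b%:R * N%:R <= (g + b)%:R :> R by rewrite -natrM ler_nat.
have he : 1 < eps * N%:R by rewrite -(ltr_pM2l eps0) mulfV ?gt_eqF in hN.
have hz : 0 < (g + b)%:R :> R by rewrite ltr0n.
rewrite ler_pdivlMr //.
move: hb hz; rewrite natrD.
have g0 : 0 <= g%:R :> R by [].
have b0 : 0 <= b%:R :> R by [].
move: g0 b0 he; set x := (g%:R : R); set y := (b%:R : R); set n := (N%:R : R).
move=> g0 b0 he hb hz; nra.
Qed.
End RF.

Unset Implicit Arguments.
Unset Strict Implicit.
Theorem lemma3p5 (R : realType) (d : nat) (eps : R) :
  (1 < d)%N -> (0 < eps)%R ->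
  exists L D : nat, (0 < L)%N /\ (0 < D)%N /\
    forall (V1 V2 : finType) (E : {set V1 * V2}) (u : 'I_L -> V1),
      (forall i : 'I_L, (D <= #|Snew E u i|)%N) ->
      (1 - eps <= prob_subset R
         (fun W : {set V2} =>
            [forall k : 'I_d.+1, forall m : 'I_d.+1,
               ((k <= m)%N && (2 <= m)%N) ==>
               [exists i : 'I_L, degW E W (u i) == k %[mod m]]]))%R.
Proof.
move=> d1 eps0.
set c := 2 ^ d.-1.
have c2 : (2 <= c)%N.
  rewrite /c; have -> : d.-1 = d.-2.+1 by lia.
  by rewrite expnS -{1}(muln1 2) leq_mul2l expn_gt0.
set a := (c - 1)%N.
have a1 : (1 <= a)%N by rewrite /a; lia.
have ac : (a + 1 = c)%N by rewrite /a; lia.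
pose N' := (Num.bound (eps^-1)).+1.
have hN : (eps^-1 < N'%:R)%R.
  apply: lt_le_trans (archi_boundP _) _; first by rewrite invr_ge0 ltW.
  by rewrite ler_nat.
pose C := ((d.+1) ^ 2 * N')%N.
exists (a * C)%N, d; split; first by rewrite muln_gt0 a1 muln_gt0 expn_gt0.
split; first lia.
move=> V1 V2 E u hS.
set L := (a * C)%N in u hS *.
have hS' : forall i, (d.-1 <= #|Snew E u i|)%N by move=> i; apply: leq_trans (hS i); lia.
set P := (fun W : {set V2} => _).
set G := [set W | P W].
pose B (p : 'I_d.+1 * 'I_d.+1) : {set {set V2}} :=
  if ((p.1 <= p.2) && (2 <= p.2))%N then [set W | Pt E u p.1 p.2 L W] else set0.
have sub : ~: G \subset \bigcup_p B p.
  apply/subsetP => W; rewrite !inE /P negb_forall => /existsP [k].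
  rewrite negb_forall => /existsP [m]; rewrite negb_imply => /andP [hkm].
  rewrite negb_exists => /forallP hn.
  apply/bigcupP; exists (k, m) => //; rewrite /B /= hkm inE /Pt.
  by apply/forallP => i; rewrite ltn_ord hn.
have hB : forall p, (#|B p| * c ^ L <= 2 ^ #|V2| * a ^ L)%N.
  move=> [k m]; rewrite /B /=; case: ifP => [/andP [_ m2]|_]; last by rewrite cards0.
  apply: Pt_iter => //; [exact: leq_trans m2 | by rewrite -ltnS ltn_ord].
have hcnt : (#|~: G| * c ^ L <= (d.+1) ^ 2 * (2 ^ #|V2| * a ^ L))%N.
  have UB := union_bound sub.
  have H2 := leq_mul UB (leqnn (c ^ L)).
  apply: (leq_trans H2).
  rewrite big_distrl /=.
  eapply leq_trans; first by apply: leq_sum => p _; exact: hB p.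
  by rewrite sum_nat_const card_prod card_ord.
have hpow : (a ^ L * C.+1 <= c ^ L)%N.
  have := pow_bound a L; rewrite ac => H.
  rewrite -(leq_pmul2r a1).
  apply: leq_trans H; rewrite -mulnA leq_mul2l; apply/orP; right; rewrite /L; nia.
have hfin : (#|~: G| * N' <= 2 ^ #|V2|)%N.
  have cL : (0 < c ^ L)%N by rewrite expn_gt0; lia.
  rewrite -(leq_pmul2r cL).
  have h1 := leq_mul hcnt (leqnn N').
  have h3 : (a ^ L * C <= c ^ L)%N by apply: leq_trans hpow; rewrite leq_mul2l leqnSn orbT.
  have h4 := leq_mul (leqnn (2 ^ #|V2|)) h3.
  move: h1 h4; rewrite /C.
  set x := #|_|; set y := c ^ L; set z := a ^ L; set n2 := 2 ^ _; nia.
have hsum : (#|G| + #|~: G| = 2 ^ #|V2|)%N by rewrite cardsC card_sets.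
have hpos : (0 < 2 ^ #|V2|)%N by rewrite expn_gt0.
rewrite /prob_subset -/G -hsum.
apply: (real_final (N := N')) => //; last by rewrite hsum.
by rewrite hsum.
Qed.
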